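(* Let $q$ be a prime power, $n,r$ integers with $r\le\lfloor n/2\rfloor$, and $0<\rho<r$. For $0 \le \delta \le \rho$, let $T_\delta = \min \sum_{i=0}^r A_i(\delta)$, where the minimum is over all integer sequences $(A_i(\delta))_{i=0}^r$ satisfying: $A_i(\delta) = 0$ for $0\le i\le \delta-1$; $1 \le A_\delta(\delta) \le N_{\mathrm{C}}(\delta)$; $0 \le A_i(\delta)\le N_{\mathrm{C}}(i)$ for $\delta+1\le i\le r$; and $\sum_{i=0}^r A_i(\delta)\sum_{s=0}^\rho J_{\mathrm{C}}(l,s,i) \ge N_{\mathrm{C}}(l)$ for all $0\le l\le r$. Then $K_{\mathrm{C}}(q,n,r,\rho) \ge \max_{0\le\delta\le\rho} T_\delta$.
   Context: $E_r(q,n)$ is the set of $r$-dimensional subspaces of $\mathrm{GF}(q)^n$, with injection distance $d_{\mathrm{I}}(U,V) = \dim(U+V)-\min\{\dim U,\dim V\}$. ${m\brack k}=\prod_{i=0}^{k-1}\frac{q^m-q^i}{q^k-q^i}$; $N_{\mathrm{C}}(d) = q^{d^2}{r\brack d}{n-r \brack d}$ is the number of elements of $E_r(q,n)$ at injection distance $d$ from a fixed one. For $0\le u,s,d\le r$, $J_{\mathrm{C}}(u,s,d)$ is the number of $W\in E_r(q,n)$ with $d_{\mathrm{I}}(W,U)=u$ and $d_{\mathrm{I}}(W,V)=s$, for any fixed $U,V\in E_r(q,n)$ with $d_{\mathrm{I}}(U,V)=d$ (it depends only on $u,s,d$). The covering radius of a nonempty $\mathcal{C}\subseteq E_r(q,n)$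 is $\max_{U}\min_{C\in\mathcal{C}} d_{\mathrm{I}}(U,C)$; $K_{\mathrm{C}}(q,n,r,\rho)$ is the minimum cardinality of a subset of $E_r(q,n)$ with covering radius at most $\rho$. *)

(* Defs.v *)
(* Subspaces of GF(q)^n are represented by their canonical
   row-space matrices <<A>>%MS in 'M[F]_n (rows are vectors of F^n). *)
From mathcomp Require Import all_boot all_order all_algebra.
Set Implicit Arguments. Unset Strict Implicit. Unset Printing Implicit Defensive.
Import Order.TTheory GRing.Theory Num.Theory.

Local Open Scope ring_scope.

Section Grass.
Variables (F : finFieldType) (n r : nat).

Definition Er : {set 'M[F]_n} :=
  [set A : 'M[F]_n | (<<A>>%MS == A) && (\rank A == r)%N].

Definition dI (U V : 'M[F]_n) : nat :=
  (\rank (U + V)%MS - minn (\rank U) (\rank V))%N.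

(* J_C(u,s,d): number of W in E_r with d_I(W,U)=u and d_I(W,V)=s, for a fixed
   (chosen) pair U,V in E_r with d_I(U,V)=d; 0 if no such pair exists. *)
Definition JC (u s d : nat) : nat :=
  match [pick p : 'M[F]_n * 'M[F]_n |
           (p.1 \in Er) && (p.2 \in Er) && (dI p.1 p.2 == d)] with
  | Some p => #|[set W in Er | (dI W p.1 == u) && (dI W p.2 == s)]|
  | None => 0%N
  end.

(* covering radius of a nonempty code C ⊆ E_r:
   max_{U in E_r} min_{C0 in C} d_I(U,C0)
   (the default value n of the inner min is irrelevant for nonempty C since
   all distances are <= r <= n) *)
Definition covrad (C : {set 'M[F]_n}) : nat :=
  \max_(U in Er) \big[minn/n]_(C0 in C) dI U C0.

(* K_C(q,n,r,rho): minimum cardinality of a nonempty subset of E_r with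
   covering radius at most rho (E_r itself is such a subset). *)
Definition KC (rho : nat) : nat :=
  \big[minn/#|Er|]_(C : {set 'M[F]_n} |
       [&& C \subset Er, C != set0 & (covrad C <= rho)%N]) #|C|.

End Grass.

Definition gbin (q m k : nat) : rat :=
  \prod_(i < k) (((q ^ m)%:R - (q ^ i)%:R) / ((q ^ k)%:R - (q ^ i)%:R)).

Definition NC (q n r d : nat) : rat :=
  (q ^ (d * d))%:R * gbin q r d * gbin q (n - r) d.

Definition feasible (F : finFieldType) (n r rho delta : nat) (A : nat -> int)
  : Prop :=
  let q := #|F| in
  (forall i, (i < delta)%N -> A i = 0)
  /\ (1 <= A delta /\ (A delta)%:~R <= NC q n r delta)
  /\ (forall i, (delta < i <= r)%N -> 0 <= A i /\ (A i)%:~R <= NC q n r i)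
  /\ (forall l, (l <= r)%N ->
        NC q n r l <=
        \sum_(i < r.+1) (A i)%:~R *
            (\sum_(s < rho.+1) (JC F n r l s i))%:R).

Definition is_T (F : finFieldType) (n r rho delta : nat) (t : int) : Prop :=
  (exists A, feasible F n r rho delta A /\ \sum_(i < r.+1) A i = t)
  /\ (forall A, feasible F n r rho delta A -> t <= \sum_(i < r.+1) A i).

(* Main.v *)
Require Import Defs.
From mathcomp Require Import all_boot all_order all_algebra.
Import Order.TTheory GRing.Theory Num.Theory.
Local Open Scope ring_scope.
From mathcomp Require Import zify ring lra.
From Stdlib Require Import Classical.

Set Implicit Arguments. Unset Strict Implicit. Unset Printing Implicit Defensive.

Section Count.
Variable F : finFieldType.
Local Notation q := #|F|.

Lemma card_sub_vec n m (X : 'M[F]_(m, n)) :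
  #|[set v : 'rV[F]_n | (v <= X)%MS]| = (q ^ \rank X)%N.
Proof.
have -> : [set v : 'rV[F]_n | (v <= X)%MS] =
          [set u *m row_base X | u in [set: 'rV[F]_(\rank X)]].
  apply/setP => v; rewrite inE; apply/idP/imsetP.
    rewrite -(eq_row_base X) => /submxP [u ->]; by exists u; rewrite ?inE.
  by case=> u _ ->; rewrite (submx_trans (submxMl _ _)) // eq_row_base.
rewrite card_imset; last exact: row_free_inj (row_base_free X).
by rewrite cardsT card_mx mul1n.
Qed.

Lemma rank_adds_row n m (A : 'M[F]_(m, n)) (v : 'rV[F]_n) :
  \rank (A + v)%MS = (\rank A + ~~ (v <= A)%MS)%N.
Proof.
case: (boolP (v <= A)%MS) => vA /=.
  rewrite addn0; apply/eqP; rewrite eq_sym (mxrank_leqif_sup (addsmxSl A v)).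
  by rewrite addsmx_sub submx_refl vA.
have v0 : v != 0 by apply: contraNneq vA => ->; rewrite sub0mx.
have c0 : \rank (A :&: v)%MS = 0%N.
  case: (eqVneq (\rank (A :&: v)%MS) 0%N) => // nz.
  have: (\rank (A :&: v)%MS <= \rank v)%N by rewrite mxrankS ?capmxSr.
  rewrite rank_rV v0 => h.
  have : (v <= A :&: v)%MS.
    by rewrite -(mxrank_leqif_sup (capmxSr A v)) rank_rV v0 eqn_leq h lt0n nz.
  by rewrite sub_capmx (negbTE vA).
have := mxrank_sum_cap A v; rewrite c0 addn0 rank_rV v0 => ->; by [].
Qed.


Lemma card_diff_sub n m1 m2 (T : 'M[F]_(m1, n)) (Y : 'M[F]_(m2, n)) :
  (Y <= T)%MS ->
  #|[set v : 'rV[F]_n | (v <= T)%MS && ~~ (v <= Y)%MS]| =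
  (q ^ \rank T - q ^ \rank Y)%N.
Proof.
move=> YT.
have -> : [set v : 'rV[F]_n | (v <= T)%MS && ~~ (v <= Y)%MS] =
   [set v : 'rV[F]_n | (v <= T)%MS] :\: [set v : 'rV[F]_n | (v <= Y)%MS].
  by apply/setP => v; rewrite !inE andbC.
rewrite cardsD card_sub_vec -(card_sub_vec Y); congr (_ - _)%N.
apply: eq_card => v; rewrite !inE.
by apply/andP/idP => [[]//|vY]; split=> //; apply: submx_trans YT.
Qed.

Lemma adds_col3 n s1 m (S : 'M[F]_(s1, n)) (A : 'M[F]_(m, n)) (v : 'rV[F]_n) :
  (S + col_mx v A :=: (S + A) + v)%MS.
Proof.
have := submx_refl (col_mx v A); rewrite col_mx_sub => /andP [vc Ac].
apply/eqmxP/andP; split; rewrite !addsmx_sub ?col_mx_sub.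
  rewrite (submx_trans (addsmxSl S A) (addsmxSl _ v)) addsmxSr /=.
  by rewrite (submx_trans (addsmxSr S A) (addsmxSl _ v)).
rewrite addsmxSl /=.
by rewrite (submx_trans Ac (addsmxSr _ _)) (submx_trans vc (addsmxSr _ _)).
Qed.

Lemma count_ext n s1 t1 (S : 'M[F]_(s1, n)) (T : 'M[F]_(t1, n)) m :
  (S <= T)%MS ->
  #|[set B : 'M[F]_(m, n) | (B <= T)%MS && (\rank (S + B)%MS == \rank S + m)%N]| =
  (\prod_(i < m) (q ^ \rank T - q ^ (\rank S + i)))%N.
Proof.
move=> ST; elim: m => [|m IHm].
  rewrite big_ord0 -(card1 (0 : 'M[F]_(0, n))); apply: eq_card => B.
  rewrite !inE [B]flatmx0 sub0mx addn0 eqxx /=.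
  by rewrite addsmx0 eqxx.
rewrite big_ord_recr /= -{}IHm -[LHS]sum1_card -[m.+1]add1n.
set Pm := [set B : 'M[F]_(m, n) | _].
rewrite (partition_big dsubmx (mem Pm)) /=; last first.
  move=> B; rewrite !inE -[B](vsubmxK) col_mx_sub col_mxKd.
  case/andP=> /andP [_ ->] /=.
  have e := adds_col3 S (dsubmx B) (usubmx B).
  rewrite e rank_adds_row => /eqP h.
  have : (\rank (S + dsubmx B)%MS <= \rank S + m)%N.
    by apply: leq_trans (mxrank_adds_leqif _ _) _; rewrite leq_add2l rank_leq_row.
  by move: h; case: (~~ _) => /= h hle; apply/eqP; lia.
rewrite -sum_nat_const; apply: eq_bigr => A; rewrite inE => /andP [AT /eqP rA].
rewrite (reindex (col_mx^~ A)) /=; last first.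
  exists usubmx => [v _ | B]; first by rewrite col_mxKu.
  by case/andP=> _ /eqP <-; rewrite vsubmxK.
rewrite -rA -card_diff_sub; last by rewrite addsmx_sub ST AT.
rewrite -sum1_card; apply: eq_bigl => v; rewrite !inE col_mxKd eqxx andbT.
rewrite col_mx_sub AT andbT.
have e := adds_col3 S A v.
rewrite e rank_adds_row rA -addnA eqn_add2l.
by case: (~~ _); rewrite ?addn1 ?addn0 ?andbT ?andbF /= ?eqxx ?andbT /= -?[(m == 1 + m)%N]eq_sym ?(gtn_eqF (ltnSn m)) ?andbF.

Qed.

End Count.

Section Dist.
Variables (F : finFieldType) (n r : nat).
Local Notation q := #|F|.
Local Notation Er := (Er F n r).
Local Notation dI := (@dI F n).

Lemma inErP (U : 'M[F]_n) : reflect (<<U>>%MS = U /\ \rank U = r) (U \in Er).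
Proof. by rewrite inE; apply: (iffP andP) => [[/eqP ? /eqP ?]|[-> ->]]. Qed.

Lemma dIE (U V : 'M[F]_n) : U \in Er -> V \in Er -> dI U V = (\rank (U + V)%MS - r)%N.
Proof. by rewrite /Defs.dI => /inErP [_ ->] /inErP [_ ->]; rewrite minnn. Qed.

Lemma rank_adds_ge (U V : 'M[F]_n) : (\rank U <= \rank (U + V)%MS)%N.
Proof. by rewrite mxrankS // addsmxSl. Qed.

Lemma dI_cap (U V : 'M[F]_n) : U \in Er -> V \in Er ->
  (\rank (U :&: V)%MS + dI U V = r)%N.
Proof.
move=> hU hV; rewrite dIE //; have := mxrank_sum_cap U V.
have := rank_adds_ge U V.
move: hU hV => /inErP [_ ->] /inErP [_ ->]. lia.
Qed.


Lemma adds_rank_split m1 d (X : 'M[F]_(m1, n)) (B : 'M[F]_(d, n)) :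
  \rank (X + B)%MS = (\rank X + d)%N -> \rank B = d /\ (X :&: B)%MS = 0.
Proof.
move=> h; have := mxrank_sum_cap X B; rewrite h.
have := rank_leq_row B => hB e.
have rB : \rank B = d by lia.
split => //; apply/eqP; rewrite -mxrank_eq0; apply/eqP; lia.
Qed.

Lemma disj_rank m1 m2 (X : 'M[F]_(m1, n)) (B : 'M[F]_(m2, n)) :
  (X :&: B)%MS = 0 -> \rank (X + B)%MS = (\rank X + \rank B)%N.
Proof. exact: mxrank_disjoint_sum. Qed.

Lemma cap0_sub m1 m2 m3 m4 (X : 'M[F]_(m1, n)) (B : 'M[F]_(m2, n))
   (X' : 'M[F]_(m3, n)) (B' : 'M[F]_(m4, n)) :
  (X' <= X)%MS -> (B' <= B)%MS -> (X :&: B)%MS = 0 -> (X' :&: B')%MS = 0.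
Proof.
move=> h1 h2 h0; apply/eqP; rewrite -submx0 -h0.
by apply: capmxS.
Qed.

Lemma card_dist (U : 'M[F]_n) d : U \in Er -> (d <= r)%N ->
  (#|[set W in Er | dI W U == d]| *
    ((\prod_(i < r - d) (q ^ (r - d) - q ^ i)) *
      \prod_(i < d) (q ^ r - q ^ (r - d + i))))%N
  = ((\prod_(i < r - d) (q ^ r - q ^ i)) * \prod_(i < d) (q ^ n - q ^ (r + i)))%N.
Proof.
move=> hU hd; have [gU rU] := inErP _ hU.
set k := (r - d)%N.
pose P1 := [set B : 'M[F]_(k, n) | (B <= U)%MS &&
              (\rank ((0%R : 'M[F]_n) + B)%MS == (\rank (0%R : 'M[F]_n) + k)%N)].
pose P2 := [set B : 'M[F]_(d, n) | (B <= (1%:M : 'M[F]_n))%MS &&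
              (\rank (U + B)%MS == (\rank U + d)%N)].
have c1 : #|P1| = (\prod_(i < k) (q ^ r - q ^ i))%N.
  by rewrite count_ext ?sub0mx // mxrank0 rU; apply: eq_bigr => i _; rewrite add0n.
have c2 : #|P2| = (\prod_(i < d) (q ^ n - q ^ (r + i)))%N.
  by rewrite count_ext ?submx1 // mxrank1 rU.
rewrite -c1 -c2 -cardsX -[#|setX _ _|]sum1_card.
set D := [set W in Er | dI W U == d].
rewrite (partition_big (fun p : 'M[F]_(k, n) * 'M[F]_(d, n) => <<col_mx p.1 p.2>>%MS)
           (mem D)) /=; last first.
  case=> B1 B2 /setXP [/= hB1 hB2]; rewrite !inE in hB1 hB2.
  case/andP: hB1 => B1U /eqP r1; case/andP: hB2 => _ /eqP r2.
  move: r1; rewrite !mxrank0 add0n adds0mx => r1.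
  have [rB2 UB20] := adds_rank_split r2.
  have B120 : (B1 :&: B2)%MS = 0 by apply: cap0_sub UB20.
  have rc : \rank (col_mx B1 B2) = r.
    by rewrite -addsmxE disj_rank // r1 rB2 /k; lia.
  have hW : <<col_mx B1 B2>>%MS \in Er by apply/inErP; rewrite genmx_id mxrank_gen.
  rewrite inE hW /= dIE // ?mxrank_gen //.
  have -> : \rank (<<col_mx B1 B2>> + U)%MS = \rank (U + B2)%MS.
    apply/eqP; rewrite eqn_leq !mxrankS //.
      rewrite addsmx_sub addsmxSr /= (submx_trans _ (addsmxSl _ _)) // genmxE.
      by have := submx_refl (col_mx B1 B2); rewrite col_mx_sub => /andP [].
    rewrite addsmx_sub addsmxSl andbT genmxE col_mx_sub addsmxSr andbT.
    exact: submx_trans B1U (addsmxSl _ _).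
  by rewrite r2 rU; apply/eqP; lia.
rewrite -sum_nat_const; apply: eq_bigr => W; rewrite inE => /andP [hW /eqP dW].
have [gW rW] := inErP _ hW.
have rWU : \rank (W :&: U)%MS = k by have := dI_cap hW hU; rewrite dW /k; lia.
pose F1 := [set B : 'M[F]_(k, n) | (B <= W :&: U)%MS &&
              (\rank ((0%R : 'M[F]_n) + B)%MS == (\rank (0%R : 'M[F]_n) + k)%N)].
pose F2 := [set B : 'M[F]_(d, n) | (B <= W)%MS &&
              (\rank ((W :&: U) + B)%MS == (\rank (W :&: U) + d)%N)].
have f1 : #|F1| = (\prod_(i < k) (q ^ k - q ^ i))%N.
  by rewrite count_ext ?sub0mx // mxrank0 rWU; apply: eq_bigr => i _; rewrite add0n.
have f2 : #|F2| = (\prod_(i < d) (q ^ r - q ^ (k + i)))%N.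
  by rewrite count_ext ?capmxSl // rW rWU.
rewrite -f1 -f2 -cardsX -sum1_card; symmetry; apply: eq_bigl; case=> B1 B2.
rewrite !inE /=; apply/idP/idP.
  case/andP=> /andP [/andP [B1U /eqP r1] /andP [_ /eqP r2]] /eqP eW.
  rewrite r1 eqxx andbT.
  have : (col_mx B1 B2 <= W)%MS by rewrite -eW genmxE.
  rewrite col_mx_sub.
  case/andP => B1W B2W; rewrite sub_capmx B1W B1U B2W /=.
  have [rB2 UB20] := adds_rank_split r2.
  rewrite disj_rank ?rB2 //; apply: cap0_sub UB20 => //; exact: capmxSr.
case/andP=> /andP [B1WU /eqP r1] /andP [B2W /eqP r2].
have B1U : (B1 <= U)%MS by apply: submx_trans B1WU (capmxSr _ _).
have B1W : (B1 <= W)%MS by apply: submx_trans B1WU (capmxSl _ _).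
have [rB2 WUB20] := adds_rank_split r2.
have UB20 : (U :&: B2)%MS = 0.
  apply/eqP; rewrite -submx0 -WUB20 sub_capmx capmxSr andbT sub_capmx capmxSl andbT.
  exact: submx_trans (capmxSr _ _) B2W.
rewrite B1U r1 eqxx submx1 disj_rank // rB2 eqxx /=.
move: r1; rewrite !mxrank0 add0n adds0mx => r1.
have B120 : (B1 :&: B2)%MS = 0 by apply: cap0_sub UB20.
have rc : \rank (col_mx B1 B2) = r.
  by rewrite -addsmxE disj_rank // r1 rB2 /k; lia.
have sc : (col_mx B1 B2 <= W)%MS by rewrite col_mx_sub B1W B2W.
have : (col_mx B1 B2 == W)%MS by rewrite -(mxrank_leqif_eq sc) rc rW.
by move/eqmxP/eq_genmx => ->; rewrite gW.
Qed.

End Dist.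
Arguments inErP {F n r U}.

Section Alg.
Variables (q : nat) (hq : (1 < q)%N).
Local Notation x := (q%:R : rat).

Lemma xdiff a b : (a <= b)%N -> (((q ^ b - q ^ a)%N)%:R : rat) = x ^+ b - x ^+ a.
Proof. by move=> ab; rewrite natrB ?natrX // leq_exp2l. Qed.

Lemma xdiff_neq0 a b : (a < b)%N -> x ^+ b - x ^+ a != 0.
Proof.
move=> ab; rewrite -natrX -natrX -natrB ?pnatr_eq0 ?subn_eq0 -?ltnNge ?ltn_exp2l //.
by rewrite leq_exp2l // ltnW.
Qed.

Definition Gq j := \prod_(i < j) (x ^+ j - x ^+ i).
Definition Rq m j := \prod_(i < j) (x ^+ m - x ^+ i).

Lemma Gq_neq0 j : Gq j != 0.
Proof. by apply/prodf_neq0 => i _; apply: xdiff_neq0. Qed.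

Lemma gbinE m j : gbin q m j * Gq j = Rq m j.
Proof.
rewrite /gbin prodf_div.
have -> : \prod_(i < j) ((q ^ j)%:R - (q ^ i)%:R) = Gq j :> rat.
  by apply: eq_bigr => i _; rewrite !natrX.
rewrite divfK ?Gq_neq0 //.
by apply: eq_bigr => i _; rewrite !natrX.
Qed.

Lemma shift_prod a b m :
  \prod_(i < m) (x ^+ (a + b) - x ^+ (a + i)) = x ^+ (a * m) * Rq b m.
Proof.
rewrite /Rq exprM.
have -> : (x ^+ a) ^+ m = \prod_(i < m) x ^+ a by rewrite prodr_const card_ord.
rewrite -big_split /=.
by apply: eq_bigr => i _; rewrite !exprD mulrBr.
Qed.

Lemma split_R a b : Rq (a + b) (a + b) = Rq (a + b) a * (x ^+ (a * b) * Gq b).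
Proof.
by rewrite /Rq big_split_ord /= -shift_prod.
Qed.

Lemma sym_R a b : Rq (a + b) a * Gq b = Rq (a + b) b * Gq a.
Proof.
have h1 := split_R a b; have h2 := split_R b a.
rewrite [(b + a)%N]addnC mulnC in h2.
have hx : x ^+ (a * b) != 0 by rewrite expf_neq0 // pnatr_eq0 -lt0n ltnW.
apply: (mulIf hx); rewrite -!mulrA (mulrC (Gq b)) (mulrC (Gq a)) -h1 h2.
by [].
Qed.

End Alg.

Section Alg2.
Variables (q : nat) (hq : (1 < q)%N).
Local Notation x := (q%:R : rat).

Lemma gbin_sym k d : gbin q (k + d) d * Gq q k = Rq q (k + d) k.
Proof.
have hG : Gq q d != 0 by apply: Gq_neq0.
apply: (mulIf hG); rewrite -mulrA (mulrC (Gq q k)) mulrA gbinE //.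
by rewrite (sym_R hq k d).
Qed.

Lemma NC_eq n k d : (k + d + d <= n)%N ->
  NC q n (k + d) d * (Gq q k * (x ^+ (k * d) * Gq q d)) =
  Rq q (k + d) k * (x ^+ ((k + d) * d) * Rq q (n - (k + d)) d).
Proof.
move=> hn; rewrite /NC natrX.
rewrite -(gbin_sym k d) -(gbinE hq (n - (k + d)) d).
rewrite mulnDl exprD; ring.
Qed.

End Alg2.

Section DistNC.
Variables (F : finFieldType) (n r : nat).
Local Notation q := #|F|.
Local Notation Er := (Er F n r).
Local Notation dI := (@dI F n).

Lemma q_gt1 : (1 < q)%N.
Proof. exact: card_finNzRing_gt1. Qed.

Lemma card_dist_NC (U : 'M[F]_n) d : U \in Er -> (d <= r)%N -> (r + d <= n)%N ->
  (#|[set W in Er | dI W U == d]|%:R : rat) = NC q n r d.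
Proof.
move=> hU hd hn; have E := congr1 (fun m => m%:R : rat) (card_dist hU hd).
move: E; rewrite /= !natrM !natr_prod.
set k := (r - d)%N.
have er : r = (k + d)%N by rewrite /k subnK.
have hq := q_gt1.
have e1 : \prod_(i < k) (((q ^ k - q ^ i)%N)%:R : rat) = Gq q k.
  by apply: eq_bigr => i _; rewrite xdiff // ltnW.
have e2 : \prod_(i < d) (((q ^ r - q ^ (k + i))%N)%:R : rat) =
          (q%:R) ^+ (k * d) * Gq q d.
  rewrite -shift_prod er; apply: eq_bigr => i _; have hi := ltn_ord i; rewrite xdiff //; lia.
have e3 : \prod_(i < k) (((q ^ r - q ^ i)%N)%:R : rat) = Rq q r k.
  by apply: eq_bigr => i _; have hi := ltn_ord i; rewrite xdiff //; lia.
have e4 : \prod_(i < d) (((q ^ n - q ^ (r + i))%N)%:R : rat) =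
          (q%:R) ^+ (r * d) * Rq q (n - r) d.
  rewrite -shift_prod subnKC; last by lia.
  by apply: eq_bigr => i _; have hi := ltn_ord i; rewrite xdiff //; lia.
rewrite e1 e2 e3 e4 => E.
have hX : Gq q k * ((q%:R : rat) ^+ (k * d) * Gq q d) != 0.
  by rewrite !mulf_neq0 ?Gq_neq0 // expf_neq0 // pnatr_eq0 -lt0n ltnW.
apply: (mulIf hX); rewrite E er NC_eq //; lia.
Qed.

End DistNC.

Lemma bigminn_le (I : finType) (P : pred I) (F : I -> nat) x0 i0 :
  P i0 -> (\big[minn/x0]_(i | P i) F i <= F i0)%N.
Proof.
move=> Pi0; have : i0 \in index_enum I by rewrite mem_index_enum.
elim: (index_enum I) => [//|j s IH]; rewrite inE big_cons.
case/orP => [/eqP <-|h]; first by rewrite Pi0 geq_minl.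
by case: (P j) => /=; [apply: leq_trans (geq_minr _ _) (IH h) | exact: IH h].
Qed.

Lemma bigminn_attained (I : finType) (P : pred I) (F : I -> nat) x0 :
  \big[minn/x0]_(i | P i) F i = x0 \/
  exists2 i, P i & \big[minn/x0]_(i | P i) F i = F i.
Proof.
apply: (big_rec (fun v => v = x0 \/ exists2 i, P i & v = F i)); first by left.
move=> i v Pi [->|[j Pj ->]].
  case: (leqP (F i) x0) => h; [right; exists i; rewrite // (minn_idPl h) | by left].
right; by case: (leqP (F i) (F j)) => h; [exists i; rewrite // (minn_idPl h) | exists j; rewrite // (minn_idPr (ltnW h))].
Qed.

Lemma bigmaxn_ge (I : finType) (P : pred I) (F : I -> nat) i0 :
  P i0 -> (F i0 <= \max_(i | P i) F i)%N.
Proof. exact: leq_bigmax_cond. Qed.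

Lemma bigmaxn_attained (I : finType) (P : pred I) (F : I -> nat) i0 :
  P i0 -> exists2 i, P i & \max_(i | P i) F i = F i.
Proof. by move=> Pi0; exists [arg max_(i > i0 | P i) F i]; [case: arg_maxnP | apply: bigmax_eq_arg]. Qed.

Lemma ivt (f : nat -> nat) N d :
  (forall j, f j.+1 <= (f j).+1)%N -> (f 0 <= d)%N -> (d <= f N)%N ->
  exists j, f j = d.
Proof.
move=> step h0; elim: N => [|N IH] hN; first by exists 0; apply/eqP; rewrite eqn_leq h0 hN.
case: (leqP d (f N)) => [/IH //|lt]; exists N.+1.
by apply/eqP; rewrite eqn_leq hN andbT; apply: leq_trans (step N) lt.
Qed.

Lemma arith1 a b c d r : (a + d = r -> a.+1 <= b -> b + c = r -> c < d)%N.
Proof. lia. Qed.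

Section Metric.
Variables (F : finFieldType) (n r : nat).
Local Notation Er := (Er F n r).
Local Notation dI := (@dI F n).

Lemma dI_sym (U V : 'M[F]_n) : dI U V = dI V U.
Proof. by rewrite /Defs.dI addsmxC minnC. Qed.

Lemma dI_le_r (U V : 'M[F]_n) : U \in Er -> V \in Er -> (dI U V <= r)%N.
Proof. by move=> hU hV; have := dI_cap hU hV; lia. Qed.

Lemma dI_refl (U : 'M[F]_n) : U \in Er -> dI U U = 0%N.
Proof.
move=> hU; have := dI_cap hU hU.
have e : (U :&: U :=: U)%MS by apply/capmx_idPl.
by rewrite e (proj2 (inErP hU)); lia.
Qed.

Lemma sub_rank_eq (A B : 'M[F]_n) : (A <= B)%MS -> \rank A = \rank B -> (B <= A)%MS.
Proof. by move=> sAB e; rewrite -(mxrank_leqif_sup sAB) e. Qed.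

Lemma dI_eq0 (U V : 'M[F]_n) : U \in Er -> V \in Er -> dI U V = 0%N -> U = V.
Proof.
move=> hU hV h0; have := dI_cap hU hV; rewrite h0 addn0 => hc.
have [gU rU] := inErP hU; have [gV rV] := inErP hV.
have UV : (U <= V)%MS.
  apply: submx_trans (capmxSr U V).
  by apply: sub_rank_eq; [exact: capmxSl | rewrite hc rU].
have VU : (V <= U)%MS.
  apply: submx_trans (capmxSl U V).
  by apply: sub_rank_eq; [exact: capmxSr | rewrite hc rV].
by rewrite -gU -gV; apply/genmxP; rewrite /eqmx UV VU.
Qed.

Lemma dI_triangle (U V W : 'M[F]_n) : U \in Er -> V \in Er -> W \in Er ->
  (dI U W <= dI U V + dI V W)%N.
Proof.
move=> hU hV hW.
have h1 := dI_cap hU hV; have h2 := dI_cap hV hW; have h3 := dI_cap hU hW.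
pose A := (U :&: V)%MS; pose B := (V :&: W)%MS.
rewrite -/A in h1; rewrite -/B in h2.
have sAB : (A + B <= V)%MS by rewrite addsmx_sub capmxSr capmxSl.
have r1 : (\rank (A + B)%MS <= r)%N by rewrite -(proj2 (inErP hV)) mxrankS.
have r2 : (\rank (A :&: B)%MS <= \rank (U :&: W)%MS)%N.
  by apply: mxrankS; rewrite sub_capmx (submx_trans (capmxSl _ _) (capmxSl _ _)) (submx_trans (capmxSr _ _) (capmxSr _ _)).
have := mxrank_sum_cap A B; lia.
Qed.

Lemma sub_rank (A : 'M[F]_n) j : (j <= \rank A)%N ->
  exists B : 'M[F]_n, (B <= A)%MS /\ \rank B = j.
Proof.
move=> hj; exists ((pid_mx j : 'M[F]_(n, \rank A)) *m row_base A); split.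
  by apply: submx_trans (submxMl _ _) _; rewrite eq_row_base.
rewrite mxrankMfree ?row_base_free // rank_pid_mx //.
exact: leq_trans hj (rank_leq_col A).
Qed.


Lemma chain_step (X Y : 'M[F]_n) : X \in Er -> Y \in Er -> (0 < dI X Y)%N ->
  exists Z, [/\ Z \in Er, (dI X Z <= 1)%N & (dI Z Y < dI X Y)%N].
Proof.
move=> hX hY hm.
have hc := dI_cap hX hY.
have [gX rX] := inErP hX; have [gY rY] := inErP hY.
pose K := (X :&: Y)%MS; rewrite -/K in hc.
have KX : (K <= X)%MS by apply: capmxSl.
have KY : (K <= Y)%MS by apply: capmxSr.
have nYX : ~~ (Y <= X)%MS.
  apply/negP => YX; have e : (X :&: Y :=: Y)%MS by apply/capmx_idPr.
  by move: hc; rewrite /K e rY; lia.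
have [i yX] := row_subPn nYX; set y := row i Y in yX.
have yY : (y <= Y)%MS by apply: row_sub.
have rD : \rank (X :\: K)%MS = dI X Y.
  have e : (X :&: K :=: K)%MS by apply/capmx_idPr.
  by have := mxrank_cap_compl X K; rewrite e rX; lia.
pose D := (X :\: K)%MS; pose j := (dI X Y).-1.
have hj : (j <= \rank D)%N by rewrite /D rD leq_pred.
have [B [BD rB]] := sub_rank hj.
pose H := (K + B)%MS.
have KB0 : (K :&: B)%MS = 0.
  by apply: (cap0_sub (X := K) (B := (X :\: K)%MS)) => //; rewrite capmxC capmx_diff.
have rH : \rank H = (\rank K + (dI X Y).-1)%N by rewrite /H disj_rank // rB.
have HX : (H <= X)%MS.
  by rewrite /H addsmx_sub KX (submx_trans BD) ?diffmxSl.
have yH : ~~ (y <= H)%MS by apply: contra yX => yH; apply: submx_trans HX.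
pose Z := <<(H + y)%MS>>%MS.
have rZ : \rank Z = r by rewrite mxrank_gen rank_adds_row yH /=; lia.
have hZ : Z \in Er by apply/inErP; rewrite genmx_id.
have HZ : (H <= Z)%MS by rewrite genmxE addsmxSl.
have yZ : (y <= Z)%MS by rewrite genmxE addsmxSr.
exists Z; split => //.
  have := dI_cap hX hZ.
  have : (\rank H <= \rank (X :&: Z)%MS)%N by apply: mxrankS; rewrite sub_capmx HX HZ.
  lia.
have := dI_cap hZ hY.
have KZ : (K <= Z)%MS by apply: submx_trans HZ; rewrite addsmxSl.
have yK : ~~ (y <= K)%MS by apply: contra yX => yK; apply: submx_trans KX.
have : (\rank (K + y)%MS <= \rank (Z :&: Y)%MS)%N.
  by apply: mxrankS; rewrite addsmx_sub !sub_capmx KZ KY yZ yY.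
rewrite rank_adds_row yK /= addn1 => h1 h2.
exact: arith1 hc h1 h2.
Qed.

Lemma path_ex m : forall X Y : 'M[F]_n, X \in Er -> Y \in Er -> (dI X Y <= m)%N ->
  exists p : nat -> 'M[F]_n, [/\ p 0%N = X, p m = Y, forall j, p j \in Er &
     forall j, (dI (p j) (p j.+1) <= 1)%N].
Proof.
elim: m => [|m IH] X Y hX hY hd.
  have e : X = Y by apply: dI_eq0 => //; lia.
  exists (fun _ => X); split => // j; rewrite dI_refl //.
case: (posnP (dI X Y)) => h0.
  have e : X = Y by apply: dI_eq0.
  exists (fun _ => X); split => // j; rewrite dI_refl //.
have [Z [hZ dXZ dZY]] := chain_step hX hY h0.
have hZY : (dI Z Y <= m)%N by lia.
have [p [p0 pm pE pS]] := IH Z Y hZ hY hZY.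
exists (fun j => if j is j'.+1 then p j' else X); split => //.
  by case.
by case => [|j] //=; rewrite p0.
Qed.

Lemma far_point (z : 'M[F]_n) : z \in Er -> (r + r <= n)%N ->
  exists2 w, w \in Er & dI w z = r.
Proof.
move=> hz hn; have [gz rz] := inErP hz.
pose D := (z^C)%MS.
have hj : (r <= \rank D)%N by rewrite /D mxrank_compl rz; lia.
have [B [Bz rB]] := sub_rank hj.
exists <<B>>%MS; first by apply/inErP; rewrite genmx_id mxrank_gen.
have hw : <<B>>%MS \in Er by apply/inErP; rewrite genmx_id mxrank_gen.
have := dI_cap hw hz.
have -> : (<<B>> :&: z)%MS = 0.
  apply: (cap0_sub (X := (z^C)%MS) (B := z)); first by rewrite genmxE.
    exact: submx_refl.
  by rewrite capmxC capmx_compl.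
by rewrite mxrank0.
Qed.

End Metric.

Section Iso.
Variables (F : finFieldType) (n r : nat).
Local Notation Er := (Er F n r).
Local Notation dI := (@dI F n).

Definition rb (A : 'M[F]_n) m (e : \rank A = m) : 'M[F]_(m, n) :=
  castmx (e, erefl n) (row_base A).

Lemma rbE (A : 'M[F]_n) m (e : \rank A = m) : (rb e :=: A)%MS.
Proof. exact: eqmx_trans (eqmx_cast _ _) (eq_row_base A). Qed.

Lemma sub_colL m1 m2 (A : 'M[F]_(m1, n)) (B : 'M[F]_(m2, n)) : (A <= col_mx A B)%MS.
Proof. by rewrite -addsmxE addsmxSl. Qed.
Lemma sub_colR m1 m2 (A : 'M[F]_(m1, n)) (B : 'M[F]_(m2, n)) : (B <= col_mx A B)%MS.
Proof. by rewrite -addsmxE addsmxSr. Qed.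

Lemma basis_pair (U V : 'M[F]_n) k :
  \rank U = r -> \rank V = r -> \rank (U :&: V)%MS = k ->
  exists (Kb : 'M[F]_(k, n)) (Ub Vb : 'M[F]_(r - k, n))
         (Rb : 'M[F]_(n - (k + (r - k) + (r - k)), n)),
  [/\ row_free (col_mx Kb (col_mx Ub (col_mx Vb Rb))),
      (Kb + Ub == U)%MS, (Kb + Vb == V)%MS &
      (k <= r)%N && (k + (r - k) + (r - k) <= n)%N].
Proof.
move=> hU hV hk.
have kr : (k <= r)%N by rewrite -hk -hU mxrankS ?capmxSl.
have hUd : \rank (U :\: V)%MS = (r - k)%N.
  by have := mxrank_cap_compl U V; rewrite hk hU; lia.
have hVd : \rank (V :\: U)%MS = (r - k)%N.
  by have := mxrank_cap_compl V U; rewrite capmxC hk hV; lia.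
have hs : \rank (U + V)%MS = (k + (r - k) + (r - k))%N.
  by have := mxrank_sum_cap U V; rewrite hk hU hV; lia.
have hsn : (k + (r - k) + (r - k) <= n)%N by rewrite -hs rank_leq_col.
have hR : \rank ((U + V)^C)%MS = (n - (k + (r - k) + (r - k)))%N.
  by rewrite mxrank_compl hs.
exists (rb hk), (rb hUd), (rb hVd), (rb hR).
set P := col_mx _ _.
have eU : (rb hk + rb hUd :=: U)%MS.
  have := addsmx_diff_cap_eq U V; rewrite addsmxC => e.
  exact: eqmx_trans (adds_eqmx (rbE hk) (rbE hUd)) e.
have eV : (rb hk + rb hVd :=: V)%MS.
  have := addsmx_diff_cap_eq V U; rewrite addsmxC capmxC => e.
  exact: eqmx_trans (adds_eqmx (rbE hk) (rbE hVd)) e.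
split; [|by apply/eqmxP|by apply/eqmxP|by rewrite kr hsn].
have sK : (rb hk <= P)%MS by apply: sub_colL.
have sU : (rb hUd <= P)%MS by apply: submx_trans (sub_colR _ _); apply: sub_colL.
have sV : (rb hVd <= P)%MS.
  by apply: submx_trans (sub_colR _ _); apply: submx_trans (sub_colR _ _); apply: sub_colL.
have sR : (rb hR <= P)%MS.
  by apply: submx_trans (sub_colR _ _); apply: submx_trans (sub_colR _ _); apply: sub_colR.
have UP : (U <= P)%MS by rewrite -eU addsmx_sub sK sU.
have VP : (V <= P)%MS by rewrite -eV addsmx_sub sK sV.
have CP : ((U + V)^C <= P)%MS by rewrite -(rbE hR).
have fullP : (n <= \rank P)%N.
  have := addsmx_compl_full (U + V)%MS; rewrite /row_full => /eqP e.
  by rewrite -[X in (X <= _)%N]e; apply: mxrankS; rewrite !addsmx_sub UP VP CP.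
rewrite /row_free eqn_leq rank_leq_row /=.
apply: leq_trans fullP; lia.
Qed.


Lemma iso_pair (U V U' V' : 'M[F]_n) :
  U \in Er -> V \in Er -> U' \in Er -> V' \in Er -> dI U V = dI U' V' ->
  exists M : 'M[F]_n, [/\ M \in unitmx, <<U *m M>>%MS = U' & <<V *m M>>%MS = V'].
Proof.
move=> hU hV hU' hV' hd.
have [gU rU] := inErP hU; have [gV rV] := inErP hV.
have [gU' rU'] := inErP hU'; have [gV' rV'] := inErP hV'.
have hk : \rank (U' :&: V')%MS = \rank (U :&: V)%MS.
  by have := dI_cap hU hV; have := dI_cap hU' hV'; rewrite hd; lia.
have [Kb [Ub [Vb [Rb [fP eU eV /andP [kr kn]]]]]] := basis_pair rU rV (erefl _).
have [Kb' [Ub' [Vb' [Rb' [fP' eU' eV' _]]]]] := basis_pair rU' rV' hk.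
set P := col_mx Kb _ in fP; set P' := col_mx Kb' _ in fP'.
pose M := pinvmx P *m P'.
have PM : P *m M = P' by rewrite /M mulmxA mulmxVp // mul1mx.
move: (PM); rewrite /P /P' !mul_col_mx => /eq_col_mx [eK /eq_col_mx [eUb /eq_col_mx [eVb _]]].
have uM : M \in unitmx.
  rewrite -row_free_unit /row_free eqn_leq rank_leq_row /=.
  have := mxrankM_maxr P M; rewrite PM.
  by move: fP'; rewrite /row_free => /eqP ->; apply: leq_trans; lia.
have eU2 : (Kb + Ub :=: U)%MS by apply/eqmxP.
have eV2 : (Kb + Vb :=: V)%MS by apply/eqmxP.
exists M; split => //.
  have e : (U *m M :=: U')%MS.
    apply: eqmx_trans (eqmxMr M (eqmx_sym eU2)) _.
    apply: eqmx_trans (addsmxMr _ _ _) _; rewrite eK eUb.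
    exact/eqmxP.
  by rewrite (eq_genmx e) gU'.
have e : (V *m M :=: V')%MS.
  apply: eqmx_trans (eqmxMr M (eqmx_sym eV2)) _.
  apply: eqmx_trans (addsmxMr _ _ _) _; rewrite eK eVb.
  exact/eqmxP.
by rewrite (eq_genmx e) gV'.
Qed.

Section Transport.
Variable M : 'M[F]_n.
Hypothesis uM : M \in unitmx.

Definition phi (W : 'M[F]_n) : 'M[F]_n := <<W *m M>>%MS.

Lemma rank_phi W : \rank (phi W) = \rank W.
Proof. by rewrite mxrank_gen mxrankMfree // row_free_unit. Qed.

Lemma phi_Er W : W \in Er -> phi W \in Er.
Proof. by case/inErP => _ rW; apply/inErP; rewrite genmx_id rank_phi. Qed.

Lemma dI_phi W W' : dI (phi W) (phi W') = dI W W'.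
Proof.
rewrite /Defs.dI !rank_phi; congr (_ - _)%N.
rewrite (adds_eqmx (genmxE _) (genmxE _)) -(addsmxMr W W' M).
by rewrite mxrankMfree // row_free_unit.
Qed.

Lemma phi_inj : {in Er &, injective phi}.
Proof.
move=> W W' /inErP [gW _] /inErP [gW' _] /genmxP e.
have e1 : (W *m M :=: W' *m M)%MS by apply/eqmxP.
have e2 := eqmxMr (invmx M) e1.
rewrite !mulmxK // in e2.
by rewrite -gW -gW'; apply: eq_genmx.
Qed.

Lemma phi_onto W' : W' \in Er -> exists2 W, W \in Er & phi W = W'.
Proof.
move=> hW'; have [gW' rW'] := inErP hW'.
exists <<W' *m invmx M>>%MS.
  by apply/inErP; rewrite genmx_id mxrank_gen mxrankMfree ?row_free_unit ?unitmx_inv.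
rewrite /phi; have e := eqmxMr M (genmxE (W' *m invmx M)).
by rewrite (eq_genmx e) mulmxKV.
Qed.

End Transport.

Lemma card_pair_inv (U V U' V' : 'M[F]_n) l s :
  U \in Er -> V \in Er -> U' \in Er -> V' \in Er -> dI U V = dI U' V' ->
  #|[set W in Er | (dI W U == l) && (dI W V == s)]| =
  #|[set W in Er | (dI W U' == l) && (dI W V' == s)]|.
Proof.
move=> hU hV hU' hV' hd.
have [M [uM eU eV]] := iso_pair hU hV hU' hV' hd.
rewrite -(card_in_imset (f := phi M)); last first.
  by move=> W W' /setIdP [hW _] /setIdP [hW' _]; apply: (phi_inj uM).
apply: eq_card => W'; apply/imsetP/setIdP.
  case=> W /setIdP [hW h] ->.
  by split; [apply: phi_Er | rewrite -eU -eV -/(phi M U) -/(phi M V) !dI_phi].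
case=> hW' h; have [W hW eW] := phi_onto uM hW'.
exists W => //; apply/setIdP; split => //.
by rewrite -eW -eU -eV -/(phi M U) -/(phi M V) !dI_phi in h.
Qed.

End Iso.

Lemma arith2 a b c j : (b <= a.-1 -> a <= c - j -> b <= c - j.+1)%N.
Proof. lia. Qed.

Section Code.
Variables (F : finFieldType) (n r : nat).
Local Notation Er := (Er F n r).
Local Notation dI := (@dI F n).

Definition dmin (D : {set 'M[F]_n}) (U : 'M[F]_n) : nat :=
  \big[minn/n]_(C0 in D) dI U C0.

Lemma covradE (D : {set 'M[F]_n}) : covrad r D = \max_(U in Er) dmin D U.
Proof. by []. Qed.

Lemma dmin_le (D : {set 'M[F]_n}) (U c : 'M[F]_n) : c \in D -> (dmin D U <= dI U c)%N.
Proof. by move=> cD; rewrite /dmin; apply: (bigminn_le (P := fun C0 => C0 \in D) (fun C0 => dI U C0)). Qed.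

Lemma dmin_attained (D : {set 'M[F]_n}) (U c0 : 'M[F]_n) : D \subset Er -> c0 \in D -> U \in Er -> (r < n)%N ->
  exists2 c, c \in D & dmin D U = dI U c.
Proof.
move=> DE c0D hU rn.
case: (bigminn_attained (fun C0 => C0 \in D) (fun C0 => dI U C0) n) => [h|//].
have := dmin_le U c0D; rewrite /dmin h => h2.
have := dI_le_r hU (subsetP DE _ c0D); lia.
Qed.

Definition nstep (Y X : 'M[F]_n) : 'M[F]_n :=
  odflt X [pick Z in Er | (dI X Z <= 1)%N && (dI Z Y < dI X Y)%N].

Definition gpath (X Y : 'M[F]_n) (j : nat) : 'M[F]_n := iter j (nstep Y) X.

Lemma nstep_props (X Y : 'M[F]_n) : X \in Er -> Y \in Er ->
  [/\ nstep Y X \in Er, (dI X (nstep Y X) <= 1)%N &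
      (dI (nstep Y X) Y <= (dI X Y).-1)%N].
Proof.
move=> hX hY; rewrite /nstep; case: pickP => [Z /andP [hZ /andP [h1 h2]]|none] /=.
  by split => //; lia.
rewrite (dI_refl hX); split => //.
case: (posnP (dI X Y)) => [->//|h0].
have [Z [hZ h1 h2]] := chain_step hX hY h0.
by have := none Z; rewrite hZ h1 h2.
Qed.

Lemma gpath_props (X Y : 'M[F]_n) : X \in Er -> Y \in Er ->
  [/\ forall j, gpath X Y j \in Er,
      forall j, (dI (gpath X Y j) (gpath X Y j.+1) <= 1)%N &
      forall j, (dI (gpath X Y j) Y <= dI X Y - j)%N].
Proof.
move=> hX hY.
have hE : forall j, gpath X Y j \in Er.
  elim=> [//|j IH]; rewrite /gpath iterS; by case: (nstep_props IH hY).
split => // j.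
  by rewrite /gpath iterS; case: (nstep_props (hE j) hY).
elim: j => [|j IH]; first by rewrite subn0.
rewrite /gpath iterS; case: (nstep_props (hE j) hY) => _ _ h.
rewrite /gpath in IH; exact: arith2 h IH.
Qed.

Lemma gpath_end (X Y : 'M[F]_n) : X \in Er -> Y \in Er -> gpath X Y r = Y.
Proof.
move=> hX hY; case: (gpath_props hX hY) => hE _ hd.
apply: dI_eq0 => //; have := hd r; have := dI_le_r hX hY; lia.
Qed.


Lemma arith3 a b c d : (a <= b + c -> c <= 1 -> b = d -> a <= d.+1)%N.
Proof. lia. Qed.

Lemma arith4 a b c d : (a <= c + b -> c <= 1 -> b = d -> a <= d.+1)%N.
Proof. lia. Qed.

Lemma dmin_step (D D' : {set 'M[F]_n}) (U c : 'M[F]_n) :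
  D \subset Er -> D' \subset Er -> c \in D -> U \in Er -> (r < n)%N ->
  (forall x, x \in D -> exists2 y, y \in D' & (dI x y <= 1)%N) ->
  (dmin D' U <= (dmin D U).+1)%N.
Proof.
move=> DE D'E cD hU rn hnb.
have [x xD e] := dmin_attained DE cD hU rn.
have [y yD' hxy] := hnb x xD.
have hx := subsetP DE x xD; have hy := subsetP D'E y yD'.
apply: leq_trans (dmin_le U yD') _.
exact: arith3 (dI_triangle hU hx hy) hxy (esym e).
Qed.

Lemma dmin_lip (D : {set 'M[F]_n}) (U U' c : 'M[F]_n) :
  D \subset Er -> c \in D -> U \in Er -> U' \in Er -> (r < n)%N ->
  (dI U U' <= 1)%N -> (dmin D U' <= (dmin D U).+1)%N.
Proof.
move=> DE cD hU hU' rn h1.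
have [x xD e] := dmin_attained DE cD hU rn.
have hx := subsetP DE x xD.
apply: leq_trans (dmin_le U' xD) _.
by apply: arith4 (dI_triangle hU' hU hx) _ (esym e); rewrite dI_sym.
Qed.

Lemma code_point (C : {set 'M[F]_n}) rho delta :
  C \subset Er -> C != set0 -> (covrad r C <= rho)%N -> (delta <= rho)%N ->
  (rho < r)%N -> (r + r <= n)%N ->
  exists D : {set 'M[F]_n}, exists U : 'M[F]_n,
    [/\ D \subset Er, D != set0, (covrad r D <= rho)%N, (#|D| <= #|C|)%N &
        (U \in Er /\ dmin D U = delta)].
Proof.
move=> CE C0 hcov hdr hrr hn.
have rn : (r < n)%N by lia.
have [c0 c0C] := set0Pn _ C0.
have hc0 := subsetP CE c0 c0C.
case: (boolP [exists U in Er, (delta <= dmin C U)%N]).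
  case/exists_inP => Us hUs hd.
  have [hE hS _] := gpath_props hc0 hUs.
  pose f j := dmin C (gpath c0 Us j).
  have step : forall j, (f j.+1 <= (f j).+1)%N.
    by move=> j; apply: (dmin_lip (c := c0)).
  have f0 : (f 0 <= delta)%N.
    by apply: leq_trans (dmin_le _ c0C) _; rewrite /= (dI_refl hc0).
  have fr : (delta <= f r)%N by rewrite /f gpath_end.
  have [j fj] := ivt step f0 fr.
  by exists C, (gpath c0 Us j); split.
move/exists_inPn => hno.
have [w hw dw] := far_point hc0 hn.
pose E t := [set gpath c c0 t | c in C].
have EE : forall t, E t \subset Er.
  move=> t; apply/subsetP => x /imsetP [c cC ->].
  by case: (gpath_props (subsetP CE c cC) hc0).
have Ec0 : forall t, gpath c0 c0 t \in E t by move=> t; apply: imset_f.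
pose f t := covrad r (E t).
have step : forall t, (f t.+1 <= (f t).+1)%N.
  move=> t; rewrite /f !covradE; apply/bigmax_leqP => U hU.
  apply: leq_trans (_ : dmin (E t) U < (\max_(V in Er) dmin (E t) V).+1)%N.
    apply: (dmin_step (c := gpath c0 c0 t)) => // x /imsetP [c cC ->].
    exists (gpath c c0 t.+1); first by apply: imset_f.
    by case: (gpath_props (subsetP CE c cC) hc0).
  by rewrite ltnS; apply: (bigmaxn_ge (P := fun V => V \in Er) (fun V => dmin (E t) V)).
have f0 : (f 0 <= delta)%N.
  rewrite /f covradE; apply/bigmax_leqP => U hU.
  have -> : E 0%N = C by rewrite /E imset_id.
  by have := hno U hU; rewrite -ltnNge => /ltnW.
have fr : (delta <= f r)%N.
  rewrite /f covradE.
  apply: leq_trans (_ : dmin (E r) w <= _)%N; last first.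
    exact: (bigmaxn_ge (P := fun V => V \in Er) (fun V => dmin (E r) V)).
  have [x /imsetP [c cC ->] ->] := dmin_attained (EE r) (Ec0 r) hw rn.
  rewrite gpath_end ?(subsetP CE c cC) // dw; lia.
have [t ft] := ivt step f0 fr.
have [U hU eU] := bigmaxn_attained (fun V => dmin (E t) V) hw.
exists (E t), U; split => //.
- by apply/set0Pn; exists (gpath c0 c0 t).
- by rewrite -/(f t) ft.
- exact: leq_imset_card.
- by split => //; rewrite -eU -covradE.
Qed.

End Code.

Lemma card_le_split (T : finType) (P : pred T) (g : T -> nat) k :
  #|[set x | P x && (g x <= k)%N]| = (\sum_(s < k.+1) #|[set x | P x && (g x == s)]|)%N.
Proof.
elim: k => [|k IH].
  rewrite big_ord1; apply: eq_card => x; rewrite !inE leqn0 //.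
rewrite big_ord_recr /= -IH.
rewrite -(cardsID [set x | P x && (g x <= k)%N] [set x | P x && (g x <= k.+1)%N]).
congr (_ + _)%N; apply: eq_card => x; rewrite !inE.
  by case: (P x) => //=; case: (leqP (g x) k) => h //=; rewrite ?(leqW h) //; lia.
by case: (P x) => //=; case: (leqP (g x) k) => h /=; lia.
Qed.

Section Main.
Variables (F : finFieldType) (n r : nat).
Local Notation Er := (Er F n r).
Local Notation dI := (@dI F n).

Lemma JC_eq (U V : 'M[F]_n) l s : U \in Er -> V \in Er ->
  JC F n r l s (dI U V) = #|[set W in Er | (dI W U == l) && (dI W V == s)]|.
Proof.
move=> hU hV; rewrite /JC; case: pickP => [[p1 p2] /= /andP [/andP [h1 h2] /eqP hd]|none].
  by apply: card_pair_inv => //.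
by have := none (U, V); rewrite /= hU hV eqxx.
Qed.


Lemma cover_count (D : {set 'M[F]_n}) (U c0 : 'M[F]_n) rho l :
  D \subset Er -> c0 \in D -> U \in Er -> (covrad r D <= rho)%N -> (r < n)%N ->
  (#|[set W in Er | dI W U == l]| <=
   \sum_(i < r.+1) #|[set c in D | dI U c == i]| * \sum_(s < rho.+1) JC F n r l s i)%N.
Proof.
move=> DE c0D hU hcov rn.
pose G i := (\sum_(s < rho.+1) JC F n r l s i)%N.
have step1 : (#|[set W in Er | dI W U == l]| <=
   \sum_(c in D) #|[set W in Er | (dI W U == l) && (dI W c <= rho)%N]|)%N.
  rewrite -sum1_card.
  apply: (@leq_trans (\sum_(W in [set W in Er | dI W U == l]) \sum_(c in D) ((dI W c <= rho)%N : nat))%N).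
    apply: leq_sum => W /setIdP [hW _].
    have [c cD e] := dmin_attained DE c0D hW rn.
    rewrite (bigD1 c) //= -e.
    have -> : (dmin D W <= rho)%N.
      apply: leq_trans hcov; rewrite covradE.
      exact: (bigmaxn_ge (P := fun V => V \in Er) (fun V => dmin D V)).
    exact: leq_addr.
  rewrite exchange_big /=; apply: leq_sum => c cD.
  rewrite (eq_bigr (fun W => if (dI W c <= rho)%N then 1%N else 0%N)); last first.
    by move=> W _; case: ifP.
  rewrite -big_mkcondr sum1dep_card; apply: eq_leq; apply: eq_card => W.
  by rewrite !inE andbA.
apply: leq_trans step1 _.
have step2 : forall c, c \in D ->
    #|[set W in Er | (dI W U == l) && (dI W c <= rho)%N]| = G (dI U c).
  move=> c cD; have hc := subsetP DE c cD.
  have e := card_le_split (fun W => (W \in Er) && (dI W U == l)) (fun W => dI W c) rho.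
  apply: etrans (etrans _ e) _.
    by apply: eq_card => x; rewrite !inE /= andbA.
  apply: eq_bigr => s _; rewrite JC_eq //.
  by apply: eq_card => x; rewrite !inE /= andbA.
rewrite (eq_bigr (fun c => G (dI U c))) //.
rewrite (partition_big (fun c => inord (dI U c) : 'I_r.+1) xpredT) //=.
apply: leq_sum => i _.
have -> : (\sum_(c in D | inord (dI U c) == i) G (dI U c) =
          \sum_(c in D | inord (dI U c) == i) G i)%N.
  apply: eq_bigr => c /andP [cD /eqP <-]; rewrite inordK // ltnS.
  exact: dI_le_r hU (subsetP DE c cD).
rewrite sum_nat_const; apply: leq_mul => //.
apply: subset_leq_card; apply/subsetP => c; rewrite !inE => /andP [cD /eqP <-].
by rewrite cD inordK ?eqxx // ltnS; apply: dI_le_r hU (subsetP DE c cD).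
Qed.

End Main.

Lemma arithA r n rho : (r + r <= n -> rho < r -> r < n)%N.
Proof. lia. Qed.
Lemma arithB r n i : (r + r <= n -> i <= r -> r + i <= n)%N.
Proof. lia. Qed.

Section Final.
Variables (F : finFieldType) (n r : nat).
Local Notation Er := (Defs.Er F n r).
Local Notation dI := (@Defs.dI F n).

Lemma Er_elem : (r <= n)%N -> exists E0 : 'M[F]_n, E0 \in Er.
Proof.
move=> rn; have hj : (r <= \rank (1%:M : 'M[F]_n))%N by rewrite mxrank1.
have [B [_ rB]] := sub_rank hj.
by exists <<B>>%MS; apply/inErP; rewrite genmx_id mxrank_gen.
Qed.

Lemma KC_attained rho : (r <= n)%N ->
  exists C : {set 'M[F]_n},
    [/\ C \subset Er, C != set0, (covrad r C <= rho)%N & (#|C| <= KC F n r rho)%N].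
Proof.
move=> rn; have [E0 hE0] := Er_elem rn.
rewrite /KC.
case: (bigminn_attained (fun C : {set 'M[F]_n} =>
   [&& C \subset Er, C != set0 & (covrad r C <= rho)%N]) (fun C => #|C|) #|Er|) => [->|[C /and3P [h1 h2 h3] ->]].
  exists Er; split => //; first by apply/set0Pn; exists E0.
  rewrite covradE; apply/bigmax_leqP => U hU.
  by apply: leq_trans (dmin_le U hU) _; rewrite (dI_refl hU).
by exists C; split.
Qed.

Lemma sum_card_dist (D : {set 'M[F]_n}) (U : 'M[F]_n) :
  D \subset Er -> U \in Er ->
  (\sum_(i < r.+1) #|[set c in D | dI U c == i]|)%N = #|D|.
Proof.
move=> DE hU; rewrite -sum1_card.
rewrite (partition_big (fun c => inord (dI U c) : 'I_r.+1) xpredT) //=.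
apply: eq_bigr => i _; rewrite -sum1_card; apply: eq_bigl => c; rewrite !inE.
case: (boolP (c \in D)) => //= cD.
have hl : (dI U c < r.+1)%N by rewrite ltnS; apply: dI_le_r hU (subsetP DE c cD).
apply/eqP/eqP => e; first by apply: val_inj; rewrite /= inordK.
by rewrite -e inordK.
Qed.

End Final.


Unset Implicit Arguments.

Theorem proposition5 (F : finFieldType) (n r rho : nat)
  (hr : (r <= n./2)%N) (hrho0 : (0 < rho)%N) (hrho : (rho < r)%N) :
  forall delta : nat, (delta <= rho)%N ->
    exists t : int, is_T F n r rho delta t /\ t <= (KC F n r rho)%:Z.
Proof.
move=> delta hdel.
have hn : (r + r <= n)%N by rewrite addnn -geq_half_double.
have rn : (r < n)%N by apply: arithA hn hrho.
have dr : (delta <= r)%N by apply: leq_trans hdel (ltnW hrho).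
have [C [CE C0 Ccov CK]] := @KC_attained F n r rho (ltnW rn).
have [D [U [DE D0 Dcov DC [hU dU]]]] := code_point CE C0 Ccov hdel hrho hn.
have [c0 c0D] := set0Pn _ D0.
pose A (i : nat) : int := Posz #|[set c in D | Defs.dI U c == i]|.
have cardNC : forall i, (i <= r)%N -> ((A i)%:~R : rat) <= NC #|F| n r i.
  move=> i hi; rewrite /A -pmulrn -(card_dist_NC hU hi); last exact: arithB hn hi.
  rewrite ler_nat; apply: subset_leq_card; apply/subsetP => c.
  move=> /setIdP [cD e]; apply/setIdP; split; first exact: subsetP DE c cD.
  by rewrite dI_sym.
have feas : feasible F n r rho delta A.
  split; [|split; [|split]].
  - move=> i hi; rewrite /A; apply/eqP; rewrite eqz_nat cards_eq0; apply/eqP/setP => c.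
    rewrite !inE; apply/negbTE/negP => /andP [cD /eqP e].
    by have := dmin_le U cD; rewrite dU e leqNgt hi.
  - split; last exact: cardNC.
    have [c cD e] := dmin_attained DE c0D hU rn.
    rewrite /A lez_nat card_gt0; apply/set0Pn; exists c.
    by rewrite !inE cD -e dU eqxx.
  - move=> i /andP [_ hi]; split; first by rewrite /A lez_nat.
    exact: cardNC.
  - move=> l hl; rewrite -(card_dist_NC hU hl); last exact: arithB hn hl.
    apply: (@le_trans _ _ ((\sum_(i < r.+1) #|[set c in D | Defs.dI U c == i]| *
                 \sum_(s < rho.+1) JC F n r l s i)%N)%:R).
      by rewrite ler_nat; apply: (cover_count l DE c0D hU Dcov rn).
    rewrite natr_sum le_eqVlt; apply/orP; left; apply/eqP; apply: eq_bigr => i _.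
    by rewrite natrM /A -pmulrn.
have sumA : \sum_(i < r.+1) A i = Posz #|D|.
  rewrite -(sum_card_dist DE hU) -natz natr_sum.
  by apply: eq_bigr => i _; rewrite /A natz.
have nonneg : forall B, feasible F n r rho delta B -> 0 <= \sum_(i < r.+1) B i.
  move=> B [h1 [[h2 _] [h3 _]]]; apply: sumr_ge0 => i _.
  case: (ltngtP i delta) => hi.
  - by rewrite h1.
  - have hir : (i <= r)%N by rewrite -ltnS ltn_ord.
    by case: (h3 i) => //; rewrite hi hir.
  - by rewrite hi; apply: le_trans h2.
pose S (m : nat) := exists B, feasible F n r rho delta B /\ \sum_(i < r.+1) B i = Posz m.
have key : forall m, S m -> exists t : int, is_T F n r rho delta t /\ t <= Posz m.
  elim/ltn_ind => m IH Sm.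
  case: (classic (exists m', (m' < m)%N /\ S m')) => [[m' [lt Sm']]|none].
    have [t [Tt tle]] := IH m' lt Sm'.
    by exists t; split => //; apply: le_trans tle _; rewrite lez_nat ltnW.
  exists (Posz m); split => //; split => // B hB.
  have := nonneg B hB; case e: (\sum_(i < r.+1) B i) => [k|k] //= _.
  rewrite lez_nat leqNgt; apply/negP => lt; apply: none; exists k; split => //.
  by exists B.
have [t [Tt tle]] := key #|D| (ex_intro _ A (conj feas sumA)).
exists t; split => //; apply: le_trans tle _.
by rewrite lez_nat (leq_trans DC CK).
Qed.
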